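(* Let $s_j=\sigma_j+it_j\in\mathbb{C}$ ($j=1,2,3$). The double series $\sum_{m=1}^\infty\sum_{n<m}m^{-s_1}n^{-s_2}(m+n)^{-s_3}$ (over positive integers $n<m$) converges absolutely when $\sigma_1+\sigma_3>1$ and $\sigma_1+\sigma_2+\sigma_3>2$. The series $\sum_{k=2}^\infty\left|\sum_{k/2<m\le k-1}m^{-s_1}(k-m)^{-s_2}\right|^2k^{-s_3}$ converges absolutely when $2\sigma_1+\sigma_3>1$ and $2\sigma_1+2\sigma_2+\sigma_3>3$.
   Context: Complex powers $n^{s}=e^{s\log n}$ use the real logarithm of positive integers; $\sigma_j=\Re s_j$. *)

(* Defs.v *)
From Stdlib Require Import Reals List Arith.
From Coquelicot Require Import Coquelicot.
Open Scope R_scope.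

(* n^s := e^{s log n} for a positive integer n, with the real logarithm;
   written out as e^{sigma log n} (cos (t log n) + i sin (t log n)). *)
Definition cpow (n : nat) (s : C) : C :=
  (exp (Re s * ln (INR n)) * cos (Im s * ln (INR n)),
   exp (Re s * ln (INR n)) * sin (Im s * ln (INR n))).

Definition sumR (l : list nat) (f : nat -> R) : R :=
  fold_right Rplus 0 (map f l).
Definition sumC (l : list nat) (f : nat -> C) : C :=
  fold_right Cplus (RtoC 0) (map f l).

Definition below (m : nat) : list nat := seq 1 (m - 1).
Definition half_range (k : nat) : list nat :=
  filter (fun m => Nat.ltb k (2 * m)) (seq 1 (k - 1)).

Definition term1 (s1 s2 s3 : C) (m n : nat) : C :=
  Cmult (Cmult (cpow m (Copp s1)) (cpow n (Copp s2))) (cpow (m + n) (Copp s3)).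

Definition inner2 (s1 s2 : C) (k : nat) : C :=
  sumC (half_range k) (fun m => Cmult (cpow m (Copp s1)) (cpow (k - m) (Copp s2))).

Definition term2 (s1 s2 s3 : C) (k : nat) : C :=
  Cmult (RtoC (Cmod (inner2 s1 s2 k) ^ 2)) (cpow k (Copp s3)).

(* Main.v *)
Require Import Defs.
From Stdlib Require Import Reals List Arith Lra Lia.
From Coquelicot Require Import Coquelicot.
Open Scope R_scope.


Definition P (n : nat) (x : R) : R := exp (x * ln (INR n)).

Lemma exple x y : x <= y -> exp x <= exp y.
Proof. intros [H|H]. left; apply exp_increasing; auto. subst; lra. Qed.

Lemma P_pos n x : 0 < P n x.
Proof. apply exp_pos. Qed.

Lemma P_add n x y : P n (x + y) = P n x * P n y.
Proof. unfold P. rewrite <- exp_plus. f_equal. ring. Qed.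

Lemma P_one n : (1 <= n)%nat -> P n 1 = INR n.
Proof. intros H. unfold P. rewrite Rmult_1_l. apply exp_ln. apply lt_0_INR; lia. Qed.

Lemma ln_nat_ge0 n : (1 <= n)%nat -> 0 <= ln (INR n).
Proof. intros H. rewrite <- ln_1. apply ln_le; [lra|]. apply (le_INR 1). exact H. Qed.

Lemma P_mono_x n x y : (1 <= n)%nat -> x <= y -> P n x <= P n y.
Proof. intros Hn Hxy. unfold P. apply exple. apply Rmult_le_compat_r; auto using ln_nat_ge0. Qed.

Lemma ln_mono n m : (1 <= n)%nat -> (n <= m)%nat -> ln (INR n) <= ln (INR m).
Proof. intros. apply ln_le. apply lt_0_INR; lia. apply le_INR; auto. Qed.

Lemma P_mono_n_pos n m x : (1 <= n)%nat -> (n <= m)%nat -> 0 <= x -> P n x <= P m x.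
Proof. intros. unfold P. apply exple. apply Rmult_le_compat_l; auto using ln_mono. Qed.

Lemma P_mono_n_neg n m x : (1 <= n)%nat -> (n <= m)%nat -> x <= 0 -> P m x <= P n x.
Proof. intros. unfold P. apply exple. assert (ln (INR n) <= ln (INR m)) by auto using ln_mono. nra. Qed.

Lemma P_double m x : (1 <= m)%nat -> P (2 * m) x = P 2 x * P m x.
Proof. intros H. unfold P. rewrite <- exp_plus. f_equal. rewrite mult_INR, ln_mult.
  ring. simpl; lra. apply lt_0_INR; lia. Qed.

Lemma P_ge1 n x : (1 <= n)%nat -> 0 <= x -> 1 <= P n x.
Proof. intros. unfold P. pose proof (exp_ineq1_le (x * ln (INR n))).
  pose proof (ln_nat_ge0 n H). nra. Qed.

Definition K x := P 2 (Rabs x).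

Lemma K_ge1 x : 1 <= K x.
Proof. apply P_ge1; [lia| apply Rabs_pos]. Qed.

Lemma P_up m N x : (1 <= m)%nat -> (m <= N)%nat -> (N <= 2 * m)%nat -> P N x <= K x * P m x.
Proof. intros. destruct (Rle_dec 0 x).
  - apply Rle_trans with (P (2*m) x). apply P_mono_n_pos; auto; lia.
    rewrite P_double by auto. unfold K. rewrite Rabs_pos_eq by auto. lra.
  - apply Rle_trans with (P m x). apply P_mono_n_neg; auto; lra.
    pose proof (K_ge1 x); pose proof (P_pos m x); nra. Qed.

Lemma P_down m N x : (1 <= m)%nat -> (m <= N)%nat -> (N <= 2 * m)%nat -> P m x <= K x * P N x.
Proof. intros. destruct (Rle_dec 0 x).
  - apply Rle_trans with (P N x). apply P_mono_n_pos; auto.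
    pose proof (K_ge1 x); pose proof (P_pos N x); nra.
  - unfold K. rewrite Rabs_left by lra.
    replace (P m x) with (P 2 (-x) * P (2*m) x).
    apply Rmult_le_compat_l. left; apply P_pos. apply P_mono_n_neg; lia || lra.
    rewrite P_double by auto. rewrite <- Rmult_assoc, <- P_add.
    replace (-x + x) with 0 by ring. unfold P. rewrite Rmult_0_l, exp_0. ring. Qed.

Lemma P_split n m b c : (1 <= n)%nat -> (n <= m)%nat -> b <= c -> P n (-b) <= P n (-c) * P m (c - b).
Proof. intros. replace (-b) with (-c + (c - b)) by ring. rewrite P_add.
  apply Rmult_le_compat_l. left; apply P_pos. apply P_mono_n_pos; auto; lra. Qed.

Lemma Cmod_cpow n s : Cmod (cpow n s) = P n (Re s).
Proof. unfold cpow, Cmod, P. simpl fst; simpl snd.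
  set (E := exp (Re s * ln (INR n))). set (T := Im s * ln (INR n)).
  assert (H : (E * cos T) ^ 2 + (E * sin T) ^ 2 = E ^ 2).
  { pose proof (sin2_cos2 T). unfold Rsqr in H. nra. }
  rewrite H. apply sqrt_pow2. left; apply exp_pos. Qed.

Lemma Re_opp s : Re (Copp s) = - Re s.
Proof. reflexivity. Qed.

Lemma sumR_le l f g : (forall x, In x l -> f x <= g x) -> sumR l f <= sumR l g.
Proof. induction l; unfold sumR in *; simpl; intros H. lra. apply Rplus_le_compat. apply H; simpl; auto.
  apply IHl; intros; apply H; auto. Qed.

Lemma sumR_ge0 l f : (forall x, 0 <= f x) -> 0 <= sumR l f.
Proof. induction l; unfold sumR in *; simpl; intros H. lra. specialize (IHl H). specialize (H a). lra. Qed.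

Lemma sumR_scal l f k : sumR l (fun x => k * f x) = k * sumR l f.
Proof. induction l; unfold sumR in *; simpl. ring. rewrite IHl. ring. Qed.

Lemma sumR_app l1 l2 f : sumR (l1 ++ l2) f = sumR l1 f + sumR l2 f.
Proof. induction l1; unfold sumR in *; simpl. ring. rewrite IHl1. ring. Qed.

Lemma sumR_filter l p f : (forall x, 0 <= f x) -> sumR (filter p l) f <= sumR l f.
Proof. intros H. induction l; unfold sumR in *; simpl. lra. destruct (p a); simpl.
  specialize (H a); lra. specialize (H a); lra. Qed.

Lemma sumR_map l g f : sumR (map g l) f = sumR l (fun x => f (g x)).
Proof. unfold sumR. rewrite map_map. reflexivity. Qed.

Lemma sumR_ext l f g : (forall x, f x = g x) -> sumR l f = sumR l g.
Proof. intros H. unfold sumR. f_equal. apply map_ext. auto. Qed.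

Lemma sumR_seqS a n f : sumR (seq a (S n)) f = sumR (seq a n) f + f (a + n)%nat.
Proof. rewrite seq_S, sumR_app. unfold sumR at 2. simpl. ring. Qed.

Lemma sumR_cons a l f : sumR (a :: l) f = f a + sumR l f.
Proof. reflexivity. Qed.

Lemma sumR_rev N h : sumR (seq 1 N) (fun m => h (S N - m)%nat) = sumR (seq 1 N) h.
Proof. induction N. reflexivity.
  rewrite (sumR_seqS 1 N h). change (seq 1 (S N)) with (1 :: seq 2 N)%nat.
  rewrite <- seq_shift. rewrite sumR_cons, sumR_map.
  rewrite (sumR_ext _ (fun x => h (S (S N) - S x)%nat) (fun m => h (S N - m)%nat)) by (intros; f_equal).
  rewrite IHN. replace (S (S N) - 1)%nat with (1 + N)%nat by lia. ring. Qed.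

Lemma cmod_sum l f : Cmod (sumC l f) <= sumR l (fun x => Cmod (f x)).
Proof. induction l; unfold sumR, sumC in *; simpl.
  rewrite Cmod_0. lra. eapply Rle_trans. apply Cmod_triangle. lra. Qed.

Lemma P_0 x : P 0 x = 1.
Proof. unfold P. change (INR 0) with 0. unfold ln. destruct (Rlt_dec 0 0); [exfalso; exact (Rlt_irrefl _ r)|].
  rewrite Rmult_0_r; apply exp_0. Qed.

Lemma P_1 x : P 1 x = 1.
Proof. unfold P. simpl. rewrite ln_1, Rmult_0_r; apply exp_0. Qed.

Lemma key q N : 0 < q -> (1 <= N)%nat ->
  P (S N) (-(q+1)) <= (P N (-q) - P (S N) (-q)) / q.
Proof. intros Hq HN.
  set (a := ln (INR (S N)) - ln (INR N)).
  assert (HNp : 0 < INR N) by (apply lt_0_INR; lia).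
  assert (HSp : 0 < INR (S N)) by (apply lt_0_INR; lia).
  assert (Ha : / INR (S N) <= a).
  { assert (H1 : ln (INR N / INR (S N)) <= INR N / INR (S N) - 1).
    { pose proof (exp_ineq1_le (ln (INR N / INR (S N)))). rewrite exp_ln in H.
      lra. apply Rdiv_lt_0_compat; auto. }
    rewrite ln_div in H1 by auto.
    assert (INR N / INR (S N) - 1 = - / INR (S N)) by (rewrite S_INR in *; field; lra).
    unfold a. lra. }
  assert (E1 : P N (-q) = P (S N) (-q) * exp (q * a)).
  { unfold P, a. rewrite <- exp_plus. f_equal. ring. }
  assert (E2 : P (S N) (-(q+1)) = P (S N) (-q) * / INR (S N)).
  { replace (-(q+1)) with (-q + -1) by ring. rewrite P_add. f_equal.
    unfold P. replace (-1 * ln (INR (S N))) with (- ln (INR (S N))) by ring.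
    rewrite exp_Ropp, exp_ln; auto. }
  rewrite E1, E2. pose proof (exp_ineq1_le (q * a)). pose proof (P_pos (S N) (-q)).
  apply Rmult_le_reg_r with q; auto. replace ((P (S N) (- q) * exp (q * a) - P (S N) (- q)) / q * q) with (P (S N) (- q) * exp (q * a) - P (S N) (- q)) by (field; lra). assert (0 < / INR (S N)) by (apply Rinv_0_lt_compat; auto).
  set (u := P (S N) (-q)) in *. set (v := / INR (S N)) in *. set (e := exp (q*a)) in *.
  assert (0 <= u * (e - 1 - q*a)) by (apply Rmult_le_pos; lra).
  assert (0 <= (u * q) * (a - v)) by (apply Rmult_le_pos; [apply Rmult_le_pos|]; lra).
  nra. Qed.

Lemma pbound c : 1 < c -> forall N, sumR (seq 1 N) (fun n => P n (-c)) <= 1 + (1 - P N (1-c)) / (c-1).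
Proof. intros Hc N. induction N.
  - unfold sumR; simpl. rewrite P_0. unfold Rdiv. lra.
  - rewrite sumR_seqS. destruct N.
    + unfold sumR; simpl. rewrite !P_1. unfold Rdiv. lra.
    + replace (1 + S N)%nat with (S (S N)) by lia.
      pose proof (key (c-1) (S N) ltac:(lra) ltac:(lia)).
      replace (- (c - 1 + 1)) with (-c) in H by ring.
      replace (- (c-1)) with (1 - c) in H by ring.
      unfold Rdiv in *. lra. Qed.

Lemma pbound' c : 1 < c -> forall N, sumR (seq 1 N) (fun n => P n (-c)) <= 1 + 1 / (c-1).
Proof. intros Hc N. eapply Rle_trans. apply pbound; auto.
  pose proof (P_pos N (1-c)). unfold Rdiv. assert (0 < / (c-1)) by (apply Rinv_0_lt_compat; lra). nra. Qed.

Lemma ex_series_bounded (a : nat -> R) B : (forall n, 0 <= a n) -> (forall N, sum_f_R0 a N <= B) -> ex_series a.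
Proof. intros Hp Hb. destruct (growing_cv (sum_f_R0 a)) as [l Hl].
  - intros n. simpl. specialize (Hp (S n)). lra.
  - exists B. intros x [n ->]. auto.
  - exists l. apply is_series_Reals. exact Hl. Qed.

Lemma sum_f_seq g N : sum_f_R0 (fun i => g (S i)) N = sumR (seq 1 (S N)) g.
Proof. induction N. unfold sumR; simpl. ring.
  simpl sum_f_R0. rewrite IHN, (sumR_seqS 1 (S N)). f_equal. Qed.

Lemma ex_pser p : 1 < p -> ex_series (fun i => P (i + 1) (-p)).
Proof. intros Hp. apply ex_series_ext with (fun i => P (S i) (-p)).
  intros; f_equal; lia.
  apply ex_series_bounded with (1 + 1/(p-1)).
  - intros; left; apply P_pos.
  - intros N. rewrite (sum_f_seq (fun n => P n (-p))). apply pbound'; auto.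
Qed.

Lemma norm_R (x : R) : 0 <= x -> norm x = x.
Proof. intros. change (Rabs x = x). apply Rabs_pos_eq; auto. Qed.

Lemma Cmod_term1 s1 s2 s3 m n :
  Cmod (term1 s1 s2 s3 m n) = P m (- Re s1) * P n (- Re s2) * P (m+n) (- Re s3).
Proof. unfold term1. rewrite !Cmod_mult, !Cmod_cpow. reflexivity. Qed.

Lemma part1 s1 s2 s3 : Re s1 + Re s3 > 1 -> Re s1 + Re s2 + Re s3 > 2 ->
     ex_series (fun i : nat => let m := (i + 1)%nat in
                  sumR (below m) (fun n => Cmod (term1 s1 s2 s3 m n))).
Proof. intros H1 H2.
  set (a1 := Re s1) in *. set (a2 := Re s2) in *. set (a3 := Re s3) in *.
  set (c := (Rmax a2 1 + (a1 + a2 + a3 - 1)) / 2).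
  assert (Hm1 := Rmax_l a2 1). assert (Hm2 := Rmax_r a2 1).
  assert (Hm3 : Rmax a2 1 < a1 + a2 + a3 - 1).
  { unfold Rmax; destruct (Rle_dec a2 1); lra. }
  assert (Hc : 1 < c) by (unfold c; lra).
  set (p := a1 + a2 + a3 - c).
  assert (Hp : 1 < p) by (unfold p, c; lra).
  set (B := 1 + 1 / (c - 1)).
  apply (@ex_series_le R_AbsRing R_CompleteNormedModule) with (fun i => P (i+1) (-p) * (K (-a3) * B)).
  2: { apply ex_series_scal_r. apply ex_pser; auto. }
  intros i. simpl. rewrite norm_R.
  2: { apply sumR_ge0. intros; apply Cmod_ge_0. }
  set (m := (i+1)%nat).
  apply Rle_trans with (sumR (below m) (fun n => (K (-a3) * P m (-p)) * P n (-c))).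
  - apply sumR_le. intros n Hn. unfold below in Hn. apply in_seq in Hn.
    rewrite Cmod_term1. fold a1 a2 a3.
    assert (E1 := P_up m (m+n) (-a3) ltac:(lia) ltac:(lia) ltac:(lia)).
    assert (E2 := P_split n m a2 c ltac:(lia) ltac:(lia) ltac:(unfold c; lra)).
    assert (E : P m (-p) = P m (-a1) * P m (c - a2) * P m (-a3)).
    { rewrite <- !P_add. f_equal. unfold p; ring. }
    rewrite E. pose proof (P_pos m (-a1)). pose proof (P_pos n (-a2)).
    pose proof (P_pos (m+n) (-a3)). pose proof (P_pos m (c-a2)). pose proof (P_pos m (-a3)).
    pose proof (P_pos n (-c)). pose proof (K_ge1 (-a3)).
    apply Rle_trans with (P m (- a1) * (P n (-c) * P m (c - a2)) * (K (-a3) * P m (-a3))).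
    { apply Rmult_le_compat.
      - apply Rmult_le_pos; lra.
      - lra.
      - apply Rmult_le_compat_l; lra.
      - exact E1. }
    right; ring.
  - rewrite sumR_scal. pose proof (pbound' c Hc (m - 1)).
    pose proof (P_pos m (-p)). pose proof (K_ge1 (-a3)).
    unfold below. fold B in H. 
    replace (P m (- p) * (K (- a3) * B)) with ((K (- a3) * P m (- p)) * B) by ring.
    apply Rmult_le_compat_l. nra. exact H.
Qed.

Lemma part2 s1 s2 s3 : 2 * Re s1 + Re s3 > 1 -> 2 * Re s1 + 2 * Re s2 + Re s3 > 3 ->
     ex_series (fun i : nat => Cmod (term2 s1 s2 s3 (i + 2)%nat)).
Proof. intros H1 H2.
  set (a1 := Re s1) in *. set (a2 := Re s2) in *. set (a3 := Re s3) in *.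
  set (U := a2 + (2 * a1 + a3 - 1) / 2).
  set (c := (Rmax a2 1 + U) / 2).
  assert (Hm1 := Rmax_l a2 1). assert (Hm2 := Rmax_r a2 1).
  assert (Hm3 : Rmax a2 1 < U).
  { unfold U, Rmax; destruct (Rle_dec a2 1); lra. }
  assert (Hc : 1 < c) by (unfold c; lra).
  assert (Hc2 : a2 <= c) by (unfold c; lra).
  set (p := 2 * a1 + 2 * a2 + a3 - 2 * c).
  assert (Hp : 1 < p) by (unfold p, c; unfold U in Hm3 |- *; lra).
  set (B := 1 + 1 / (c - 1)).
  assert (HB : 0 <= B) by (unfold B; assert (0 < / (c-1)) by (apply Rinv_0_lt_compat; lra); unfold Rdiv; lra).
  set (K1 := K (-a1)).
  assert (HK1 := K_ge1 (-a1)). fold K1 in HK1.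
  apply (@ex_series_le R_AbsRing R_CompleteNormedModule) with (fun i => P (i+1) (-p) * ((K1 * B) ^ 2)).
  2: { apply ex_series_scal_r. apply ex_pser; auto. }
  intros i. rewrite norm_R by apply Cmod_ge_0.
  set (k := (i+2)%nat).
  assert (Hk : k = S (S i)) by (unfold k; lia).
  set (Y := K1 * P k (c - a1 - a2) * B).
  assert (HX : Cmod (inner2 s1 s2 k) <= Y).
  { unfold inner2. eapply Rle_trans. apply cmod_sum.
    apply Rle_trans with (sumR (half_range k) (fun m => (K1 * P k (c - a1 - a2)) * P (S (k-1) - m) (-c))).
    - apply sumR_le. intros m Hm. unfold half_range in Hm. apply filter_In in Hm.
      destruct Hm as [Hm Hm']. apply in_seq in Hm. apply Nat.ltb_lt in Hm'.
      rewrite Cmod_mult, !Cmod_cpow, !Re_opp. fold a1 a2.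
      replace (S (k-1) - m)%nat with (k - m)%nat by lia.
      assert (E1 := P_down m k (-a1) ltac:(lia) ltac:(lia) ltac:(lia)).
      assert (E2 := P_split (k-m) k a2 c ltac:(lia) ltac:(lia) Hc2).
      fold K1 in E1.
      assert (E : P k (c - a1 - a2) = P k (-a1) * P k (c - a2)).
      { rewrite <- P_add. f_equal; ring. }
      rewrite E.
      pose proof (P_pos m (-a1)). pose proof (P_pos (k-m) (-a2)).
      pose proof (P_pos k (-a1)). pose proof (P_pos k (c-a2)). pose proof (P_pos (k-m) (-c)).
      apply Rle_trans with ((K1 * P k (-a1)) * (P (k-m) (-c) * P k (c - a2))).
      { apply Rmult_le_compat; lra. }
      right; ring.
    - eapply Rle_trans. apply sumR_filter.
      { intros; apply Rmult_le_pos; [apply Rmult_le_pos|]; first [lra | left; apply P_pos]. }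
      rewrite sumR_scal. rewrite (sumR_rev (k-1) (fun j => P j (-c))).
      unfold Y. apply Rmult_le_compat_l.
      apply Rmult_le_pos. lra. left; apply P_pos.
      apply pbound'; auto. }
  unfold term2. rewrite Cmod_mult, Cmod_R, Cmod_cpow, Re_opp. fold a3.
  rewrite Rabs_pos_eq by (apply pow_le; apply Cmod_ge_0).
  assert (HX2 : Cmod (inner2 s1 s2 k) ^ 2 <= Y ^ 2).
  { apply pow_incr. split. apply Cmod_ge_0. exact HX. }
  assert (HPk : P k (-p) <= P (i+1) (-p)) by (apply P_mono_n_neg; lia || lra).
  assert (EY : Y ^ 2 * P k (-a3) = (K1 * B) ^ 2 * P k (-p)).
  { unfold Y. replace (-p) with (2 * (c - a1 - a2) + - a3) by (unfold p; ring).
    rewrite P_add. replace (2 * (c - a1 - a2)) with ((c - a1 - a2) + (c - a1 - a2)) by ring.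
    rewrite P_add. ring. }
  pose proof (P_pos k (-a3)). pose proof (P_pos k (-p)).
  apply Rle_trans with (Y ^ 2 * P k (-a3)).
  apply Rmult_le_compat_r; lra.
  rewrite EY. rewrite Rmult_comm. apply Rmult_le_compat_r. apply pow2_ge_0. exact HPk.
Qed.

Theorem theorem2p1 (s1 s2 s3 : C) :
  (Re s1 + Re s3 > 1 -> Re s1 + Re s2 + Re s3 > 2 ->
     (* absolute convergence of the double series over m >= 1, 1 <= n < m *)
     ex_series (fun i : nat => let m := (i + 1)%nat in
                  sumR (below m) (fun n => Cmod (term1 s1 s2 s3 m n)))) /\
  (2 * Re s1 + Re s3 > 1 -> 2 * Re s1 + 2 * Re s2 + Re s3 > 3 ->
     (* absolute convergence of the series over k >= 2 *)
     ex_series (fun i : nat => Cmod (term2 s1 s2 s3 (i + 2)%nat))).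
Proof. split. apply part1. apply part2. Qed.
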